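(* In the setting described in the context, let $u_1=\min\{x\in[d,v]: f^{2}(x)=d\}$, $\breve u_0'=\max\{x\in[u_1,v]: f^2(x)=d\}$, for $n\ge1$ let $\breve\mu_{m,n}=\min\{x\in[\breve u_0',v]: f^{m+2n}(x)=d\}$, and for $n,k\ge1$ let $\breve\mu'_{m,n,k}=\max\{x\in[\breve\mu_{m,n+1},\breve\mu_{m,n}]: f^{m+2n+2k}(x)=d\}$ (these sets are nonempty). Then for each $n\ge1$ and $k\ge1$, every periodic point of $f$ in $[\breve\mu'_{m,n,k},\breve\mu_{m,n}]$ whose least period is odd has least period $\ge m+2n+2k$.
   Context: Let $I$ be a compact interval and $f:I\to I$ continuous; $f^1=f$, $f^n=f\circ f^{n-1}$. A point $x_0$ is a periodic point of least period $k$ (a period-$k$ point) if $f^k(x_0)=x_0$ and $f^i(x_0)\ne x_0$ for $0<i<k$. Let $m\ge3$ be odd and let $P$ be a periodic orbit of $f$ of least period $m$. Put $e=f^{m-1}(\min P)$. Let $v\in[\min P,e)$ be a point with $f(v)=e$, and let $z\in(v,e)$ be a fixed point of $f$ (such points exist). Define $z_0=\min\{x\in[v,z]: f^2(x)=x\}$ and $d=\max\{x\in[\min P,v]: f^2(x)=z_0\}$ (both sets are nonempty). *)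

(* Defs.v *)
From Stdlib Require Import Reals Lra Lia Arith.
Open Scope R_scope.

Definition iter (f : R -> R) (n : nat) (x : R) : R := Nat.iter n f x.

Definition least_period (f : R -> R) (k : nat) (x : R) : Prop :=
  (0 < k)%nat /\ iter f k x = x /\ (forall i : nat, (0 < i < k)%nat -> iter f i x <> x).

Definition IsMinOf (S : R -> Prop) (x : R) : Prop := S x /\ forall y, S y -> x <= y.
Definition IsMaxOf (S : R -> Prop) (x : R) : Prop := S x /\ forall y, S y -> y <= x.

Definition continuous_on_interval (f : R -> R) (a b : R) : Prop :=
  forall x, a <= x <= b -> forall eps, 0 < eps -> exists delta, 0 < delta /\
    forall y, a <= y <= b -> Rabs (y - x) < delta -> Rabs (f y - f x) < eps.

(* Main.v *)
Require Import Defs.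
From Stdlib Require Import Reals Lra Lia Arith.
Open Scope R_scope.

Lemma iter_add' f p q x : iter f (p + q) x = iter f p (iter f q x).
Proof. unfold iter; apply Nat.iter_add. Qed.

Lemma iter_S f t x : iter f (S t) x = f (iter f t x).
Proof. reflexivity. Qed.

Lemma clamp_lip a b x y : a <= b ->
  Rabs (Rmax a (Rmin b x) - Rmax a (Rmin b y)) <= Rabs (x - y).
Proof.
  intros Hab. unfold Rmin.
  destruct (Rle_dec b x); destruct (Rle_dec b y); unfold Rmax;
  repeat match goal with |- context [Rle_dec ?u ?v] => destruct (Rle_dec u v) end;
  repeat match goal with H: ~ _ <= _ |- _ => apply Rnot_le_lt in H end;
  unfold Rabs; repeat match goal with |- context [Rcase_abs ?u] => destruct (Rcase_abs u) end; lra.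
Qed.

Lemma clamp_in a b x : a <= b -> a <= Rmax a (Rmin b x) <= b.
Proof.
  intros Hab. unfold Rmin. destruct (Rle_dec b x); unfold Rmax;
  repeat match goal with |- context [Rle_dec ?u ?v] => destruct (Rle_dec u v) end;
  repeat match goal with H: ~ _ <= _ |- _ => apply Rnot_le_lt in H end; lra.
Qed.

Lemma clamp_id a b x : a <= x <= b -> Rmax a (Rmin b x) = x.
Proof.
  intros H. unfold Rmin. destruct (Rle_dec b x); unfold Rmax;
  repeat match goal with |- context [Rle_dec ?u ?v] => destruct (Rle_dec u v) end;
  repeat match goal with H: ~ _ <= _ |- _ => apply Rnot_le_lt in H end; lra.
Qed.

Lemma IVT_int (F : R -> R) a b : a <= b -> continuous_on_interval F a b ->
  forall x1 x2 c, a <= x1 <= b -> a <= x2 <= b -> F x1 <= c <= F x2 ->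
  exists x, Rmin x1 x2 <= x <= Rmax x1 x2 /\ F x = c.
Proof.
  intros Hab HF x1 x2 c H1 H2 Hc.
  set (G := fun x => F (Rmax a (Rmin b x)) - c).
  assert (HG : continuity G).
  { intros x0. unfold continuity_pt, continue_in, limit1_in, limit_in.
    intros eps Heps. simpl. unfold R_dist.
    destruct (HF (Rmax a (Rmin b x0)) (clamp_in a b x0 Hab) eps Heps) as [del [Hdel Hd]].
    exists del. split; [lra|]. intros x [_ Hx].
    unfold G. replace (F (Rmax a (Rmin b x)) - c - (F (Rmax a (Rmin b x0)) - c))
      with (F (Rmax a (Rmin b x)) - F (Rmax a (Rmin b x0))) by ring.
    apply Hd. apply clamp_in; lra.
    eapply Rle_lt_trans. apply clamp_lip; lra. exact Hx. }
  assert (E : forall x, a <= x <= b -> G x = F x - c).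
  { intros x Hx. unfold G. rewrite clamp_id; auto. }
  destruct (Rle_dec x1 x2) as [Hle|Hle].
  - destruct (IVT_cor G x1 x2 HG Hle) as [z [Hz Gz]].
    { rewrite !E by auto. nra. }
    exists z. split.
    + unfold Rmin, Rmax; destruct (Rle_dec x1 x2); lra.
    + rewrite E in Gz. lra. unfold Rmin, Rmax in *; lra.
  - destruct (IVT_cor G x2 x1 HG) as [z [Hz Gz]]. lra.
    { rewrite !E by auto. nra. }
    exists z. split.
    + unfold Rmin, Rmax; destruct (Rle_dec x1 x2); lra.
    + rewrite E in Gz. lra. lra.
Qed.

Lemma iter_maps f a b : (forall x, a <= x <= b -> a <= f x <= b) ->
  forall t x, a <= x <= b -> a <= iter f t x <= b.
Proof.
  intros Hm t. induction t; intros x Hx. exact Hx. rewrite iter_S. apply Hm, IHt, Hx.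
Qed.

Lemma iter_cont f a b : continuous_on_interval f a b ->
  (forall x, a <= x <= b -> a <= f x <= b) ->
  forall t, continuous_on_interval (iter f t) a b.
Proof.
  intros Hc Hm t. induction t.
  - intros x Hx eps Heps. exists eps. split; [exact Heps|]. intros y Hy H. exact H.
  - intros x Hx eps Heps.
    destruct (Hc (iter f t x) (iter_maps f a b Hm t x Hx) eps Heps) as [d1 [Hd1 H1]].
    destruct (IHt x Hx d1 Hd1) as [d2 [Hd2 H2]].
    exists d2. split; [exact Hd2|]. intros y Hy Hyx. rewrite !iter_S.
    apply H1. apply iter_maps; auto. apply H2; auto.
Qed.

Lemma cont_sub_id f a b : continuous_on_interval f a b ->
  continuous_on_interval (fun x => f x - x) a b.
Proof.
  intros Hc x Hx eps Heps.
  destruct (Hc x Hx (eps/2)) as [d1 [Hd1 H1]]. lra.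
  exists (Rmin d1 (eps/2)). split. apply Rmin_pos; lra.
  intros y Hy Hyx.
  assert (A: Rabs (y - x) < d1) by (eapply Rlt_le_trans; [exact Hyx| apply Rmin_l]).
  assert (B: Rabs (y - x) < eps/2) by (eapply Rlt_le_trans; [exact Hyx| apply Rmin_r]).
  specialize (H1 y Hy A).
  replace (f y - y - (f x - x)) with ((f y - f x) - (y - x)) by ring.
  eapply Rle_lt_trans. apply Rabs_triang_inv2 || apply Rabs_triang. 
  rewrite Rabs_Ropp. lra.
Qed.
Theorem lemma13
  (a b : R) (f : R -> R)
  (Hab : a <= b)
  (Hcont : continuous_on_interval f a b)
  (Hmaps : forall x, a <= x <= b -> a <= f x <= b)
  (m : nat) (Hm3 : (3 <= m)%nat) (Hmodd : Nat.Odd m)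
  (p0 : R) (Hp0I : a <= p0 <= b) (Hp0 : least_period f m p0)
  (minP : R) (HminP : IsMinOf (fun x => exists i : nat, x = iter f i p0) minP)
  (e : R) (He : e = iter f (m - 1) minP)
  (v : R) (Hv : minP <= v < e) (Hfv : f v = e)
  (z : R) (Hz : v < z < e) (Hfz : f z = z)
  (z0 : R) (Hz0 : IsMinOf (fun x => v <= x <= z /\ iter f 2 x = x) z0)
  (d : R) (Hd : IsMaxOf (fun x => minP <= x <= v /\ iter f 2 x = z0) d)
  (u1 : R) (Hu1 : IsMinOf (fun x => d <= x <= v /\ iter f 2 x = d) u1)
  (u0' : R) (Hu0' : IsMaxOf (fun x => u1 <= x <= v /\ iter f 2 x = d) u0')
  (mu : nat -> R)
  (Hmu : forall n : nat, (1 <= n)%nat ->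
     IsMinOf (fun x => u0' <= x <= v /\ iter f (m + 2 * n) x = d) (mu n))
  (mu' : nat -> nat -> R)
  (Hmu' : forall n k : nat, (1 <= n)%nat -> (1 <= k)%nat ->
     IsMaxOf (fun x => mu (S n) <= x <= mu n /\ iter f (m + 2 * n + 2 * k) x = d)
             (mu' n k)) :
  forall n k : nat, (1 <= n)%nat -> (1 <= k)%nat ->
  forall (x : R) (p : nat), mu' n k <= x <= mu n ->
    least_period f p x -> Nat.Odd p -> (m + 2 * n + 2 * k <= p)%nat.
Proof.
  intros n k Hn Hk y p Hy Hlp Hodd.
  destruct Hmodd as [hm Hm'].
  destruct HminP as [[i0 Hi0] HminPle].
  destruct Hz0 as [[Hz0a Hz0b] Hz0min].
  destruct Hd as [[Hda Hdb] Hdmax].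
  destruct Hu1 as [[Hu1a Hu1b] Hu1min].
  destruct Hu0' as [[Hu0a Hu0b] Hu0max].
  destruct Hlp as [Hp0pos [Hpy _]].
  destruct Hodd as [hp Hp'].
  pose proof (iter_maps f a b Hmaps) as IM.
  pose proof (iter_cont f a b Hcont Hmaps) as IC.
  assert (HqI : a <= minP <= b) by (rewrite Hi0; apply IM; exact Hp0I).
  assert (HeI : a <= e <= b) by (rewrite He; apply IM; exact HqI).
  destruct Hp0 as [_ [Hp0m Hp0min]].
  assert (fmq : iter f m minP = minP).
  { rewrite Hi0, <- iter_add', Nat.add_comm, iter_add', Hp0m. reflexivity. }
  assert (gv : iter f 2 v = minP).
  { change (f (f v) = minP). rewrite Hfv, He. rewrite <- iter_S.
    replace (S (m - 1)) with m by lia. exact fmq. }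
  assert (gz0even : forall j, iter f (2 * j) z0 = z0).
  { induction j. reflexivity. replace (2 * S j)%nat with (2 + 2 * j)%nat by lia.
    rewrite iter_add', IHj. exact Hz0b. }
  assert (deven : forall j, iter f (2 * j + 2) d = z0).
  { intros j. rewrite iter_add', Hdb. apply gz0even. }
  assert (noq : iter f 2 minP = minP -> False).
  { intros Hq.
    assert (qeven : forall j, iter f (2 * j) minP = minP).
    { induction j. reflexivity. replace (2 * S j)%nat with (2 + 2 * j)%nat by lia.
      rewrite iter_add', IHj. exact Hq. }
    assert (pmc : forall c, iter f (m * c) p0 = p0).
    { induction c. rewrite Nat.mul_0_r. reflexivity.
      replace (m * S c)%nat with (m + m * c)%nat by lia.
      rewrite iter_add', IHc. exact Hp0m. }
    assert (Ep : p0 = minP).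
    { rewrite <- (pmc i0) at 1. replace (m * i0)%nat with (2 * (hm * i0) + i0)%nat by lia.
      rewrite iter_add', <- Hi0. apply qeven. }
    assert (Hf : f minP = minP).
    { rewrite <- fmq at 2. replace m with (1 + 2 * hm)%nat by lia.
      rewrite iter_add', qeven. reflexivity. }
    apply (Hp0min 1%nat). lia. rewrite Ep. exact Hf. }
  assert (HvI : a <= v <= b) by lra.
  assert (Hz0I : a <= z0 <= b) by lra.
  assert (fz0 : z0 <= f z0).
  { destruct (Rle_dec z0 (f z0)) as [h|h]; [exact h|]. exfalso.
    destruct (IVT_int (fun x => f x - x) a b Hab (cont_sub_id f a b Hcont) z0 v 0 Hz0I HvI)
      as [w [Hw Fw]].
    { rewrite Hfv. lra. }
    assert (Hwr : v <= w <= z0) by (unfold Rmin, Rmax in Hw; destruct (Rle_dec z0 v); lra).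
    assert (fw : f w = w) by lra.
    assert (z0 <= w). { apply Hz0min. split. lra. change (f (f w) = w). rewrite !fw. reflexivity. }
    assert (w = z0) by lra. subst w. lra. }
  assert (gle : forall x, u0' <= x <= v -> iter f 2 x <= d).
  { intros x Hx. destruct (Rle_dec (iter f 2 x) d) as [h|h]; [exact h|]. exfalso.
    destruct (IVT_int (iter f 2) a b Hab (IC 2%nat) v x d HvI) as [w [Hw Fw]].
    lra. rewrite gv. lra.
    assert (Hwr : x <= w <= v) by (unfold Rmin, Rmax in Hw; destruct (Rle_dec v x); lra).
    assert (w <= u0') by (apply Hu0max; split; [lra|exact Fw]).
    assert (w = x) by lra. subst w. lra. }
  assert (SL : forall j t al be x1 x2, a <= al -> be <= b -> al <= x1 <= be -> al <= x2 <= be ->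
     iter f t x1 <= d -> u1 <= iter f t x2 -> exists x, al <= x <= be /\ iter f (t + 2 * j) x = d).
  { induction j; intros t al be x1 x2 Hal Hbe H1 H2 F1 F2.
    - destruct (IVT_int (iter f t) a b Hab (IC t) x1 x2 d) as [x [Hx Fx]]; try lra.
      exists x. split. unfold Rmin, Rmax in Hx; destruct (Rle_dec x1 x2); lra.
      rewrite Nat.add_0_r. exact Fx.
    - destruct (IVT_int (iter f t) a b Hab (IC t) x1 x2 u1) as [x3 [Hx3 Fx3]]; try lra.
      destruct (IVT_int (iter f t) a b Hab (IC t) x1 x2 d) as [x4 [Hx4 Fx4]]; try lra.
      assert (al <= x3 <= be) by (unfold Rmin, Rmax in Hx3; destruct (Rle_dec x1 x2); lra).
      assert (al <= x4 <= be) by (unfold Rmin, Rmax in Hx4; destruct (Rle_dec x1 x2); lra).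
      destruct (IHj (2 + t)%nat al be x3 x4) as [x [Hx Fx]]; auto.
      + rewrite iter_add', Fx3. lra.
      + rewrite iter_add', Fx4, Hdb. lra.
      + exists x. split. exact Hx. replace (t + 2 * S j)%nat with (2 + t + 2 * j)%nat by lia. exact Fx. }
  destruct (Hmu n Hn) as [[Hmun1 Hmun2] Hmunmin].
  destruct (Hmu (S n) ltac:(lia)) as [[HmuS1 HmuS2] _].
  destruct (Hmu' n k Hn Hk) as [[Hmp1 Hmp2] Hmpmax].
  assert (HyI : a <= y <= b) by lra.
  assert (per : forall c, iter f (p * c) y = y).
  { induction c. rewrite Nat.mul_0_r. reflexivity.
    replace (p * S c)%nat with (p + p * c)%nat by lia. rewrite iter_add', IHc. exact Hpy. }
  assert (bad : forall s, iter f s y = d -> False).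
  { intros s Hs.
    assert (Ey : y = z0).
    { rewrite <- (per (s + 2)%nat). replace (p * (s + 2))%nat with (2 * (hp * (s + 2)) + (2 + s))%nat by lia.
      rewrite iter_add', (iter_add' f 2 s), Hs, Hdb. apply gz0even. }
    assert (v = z0) by lra. apply noq. rewrite <- gv at 2. rewrite <- gv. rewrite H, Hz0b. exact Hz0b. }
  assert (gy : iter f (2 + p) y <= d).
  { rewrite iter_add', Hpy. apply gle. lra. }
  destruct hp as [|hp'].
  -
    assert (fy : f y = y) by (subst p; exact Hpy).
    assert (iter f 2 y = y) by (change (f (f y) = y); rewrite !fy; reflexivity).
    assert (y <= d). { rewrite <- H. apply gle. lra. }
    exfalso. apply (bad 0%nat). simpl. lra.
  - destruct (le_lt_dec (2 + p) (m + 2 * n)) as [Hle|Hlt].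
    + exfalso. assert (Fu : u1 <= iter f (2 + p) u0').
      { replace (2 + p)%nat with ((1 + (2 * hp' + 2)) + 2)%nat by lia.
        rewrite iter_add', (iter_add' f 1 (2 * hp' + 2)).
        rewrite Hu0b, deven. simpl. lra. }
      destruct (SL ((m + 2 * n - (2 + p)) / 2)%nat (2 + p)%nat u0' y y u0') as [x [Hx Fx]]; try lra.
      replace (2 + p + 2 * ((m + 2 * n - (2 + p)) / 2))%nat with (m + 2 * n)%nat in Fx.
      2:{ assert (exists r, m + 2 * n - (2 + p) = 2 * r)%nat as [r Hr] by (exists (hm + n - hp' - 2)%nat; lia).
          rewrite Hr, (Nat.mul_comm 2 r), Nat.div_mul by lia. lia. }
      assert (mu n <= x) by (apply Hmunmin; split; [lra|exact Fx]).
      assert (x = y) by lra. subst x. apply (bad (m + 2 * n)%nat Fx).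
    + destruct (le_lt_dec (2 + p) (m + 2 * n + 2 * k)) as [Hle2|Hlt2].
      2:{ lia. }
      exfalso.
      assert (exists i, 2 + p = m + 2 * n + 2 * i /\ 1 <= i <= k)%nat as [i [Hi1 Hi2]]
        by (exists (hp' + 2 - hm - n)%nat; lia).
      assert (Fm : u1 <= iter f (2 + p) (mu n)).
      { rewrite Hi1, Nat.add_comm, iter_add', Hmun2.
        destruct i as [|i']. lia. replace (2 * S i')%nat with (2 * i' + 2)%nat by lia.
        rewrite deven. lra. }
      destruct (SL (k - i)%nat (2 + p)%nat y (mu n) y (mu n)) as [x [Hx Fx]]; try lra.
      replace (2 + p + 2 * (k - i))%nat with (m + 2 * n + 2 * k)%nat in Fx by lia.
      assert (x <= mu' n k) by (apply Hmpmax; split; [lra|exact Fx]).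
      assert (x = y) by lra. subst x. apply (bad _ Fx).
Qed.
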